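(* For any hypergraph $H$ and any $a>0$ there exist $b>0$ and $n_0>0$ such that every hypergraph $G$ on $n>n_0$ vertices with $R(G)=R(H)$ and $h_n(G)>\pi(H)+a$ contains at least $b\binom{n}{v(H)}$ copies of $H$.
   Context: A hypergraph $H=(V,E)$ has finite vertex set $V$ and edge set $E\subseteq 2^V$; $R(H)=\{|F|:F\in E\}$ is its set of edge types and $v(H)=|V|$. $H_1$ is a subgraph of $H_2$ if there is an injective $f\colon V(H_1)\to V(H_2)$ with $f(F)\in E(H_2)$ for all $F\in E(H_1)$; a copy of $H$ in $G$ is the image of such an embedding. For $G$ on $n$ vertices, $h_n(G)=\sum_{F\in E(G)}1/\binom{n}{|F|}$. $\pi_n(H)=\max\{h_n(G): G \text{ on } n \text{ vertices}, R(G)\subseteq R(H), H\not\subseteq G\}$ and $\pi(H)=\lim_{n\to\infty}\pi_n(H)$ (the limit exists). *)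

(* Defs.v *)
From HB Require Import structures.
From mathcomp Require Import all_boot all_order all_algebra.
From mathcomp Require Import all_classical all_reals all_analysis.
Set Implicit Arguments. Unset Strict Implicit. Unset Printing Implicit Defensive.
Import Order.TTheory GRing.Theory Num.Theory.
Import numFieldNormedType.Exports.
Local Open Scope ring_scope.

(* A hypergraph on the vertex set 'I_n is given by its edge set
   E : {set {set 'I_n}} (E a subset of 2^V; edges of any size, including 0). *)

Definition edge_types (n : nat) (E : {set {set 'I_n}}) : pred nat :=
  fun m => [exists F in E, #|F| == m].

Definition types_sub (n k : nat) (EG : {set {set 'I_n}}) (EH : {set {set 'I_k}})
  : bool := [forall F in EG, [exists F' in EH, #|F'| == #|F|]].

Definition is_embedding (k n : nat) (EH : {set {set 'I_k}}) (EG : {set {set 'I_n}})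
  (f : {ffun 'I_k -> 'I_n}) : bool :=
  injectiveb f && [forall F in EH, (f @: F) \in EG].

Definition subgraph (k n : nat) (EH : {set {set 'I_k}}) (EG : {set {set 'I_n}})
  : bool := [exists f, is_embedding EH EG f].

Definition copy_of (k n : nat) (EH : {set {set 'I_k}}) (f : {ffun 'I_k -> 'I_n})
  : {set 'I_n} * {set {set 'I_n}} :=
  (f @: [set: 'I_k], [set (f @: F) | F : {set 'I_k} in EH]).

Definition copies (k n : nat) (EH : {set {set 'I_k}}) (EG : {set {set 'I_n}})
  : {set {set 'I_n} * {set {set 'I_n}}} :=
  [set c | [exists f, is_embedding EH EG f && (c == copy_of EH f)]].

Definition hn (R : realType) (n : nat) (EG : {set {set 'I_n}}) : R :=
  \sum_(F in EG) ('C(n, #|F|)%:R)^-1.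

(* pi_n(H) = max { h_n(G) : G on n vertices, R(G) ⊆ R(H), H not ⊆ G }
   (h_n >= 0, so taking the max with 0 changes nothing when the family is
   nonempty; it is 0 for an empty family). *)
Definition pin (R : realType) (k : nat) (EH : {set {set 'I_k}}) (n : nat) : R :=
  \big[Num.max/0]_(EG : {set {set 'I_n}} | types_sub EG EH && ~~ subgraph EH EG)
     hn R EG.

Definition piH (R : realType) (k : nat) (EH : {set {set 'I_k}}) : R :=
  limn (pin R EH).

(* Main.v *)
Require Import Defs.
From HB Require Import structures.
From mathcomp Require Import all_boot all_order all_algebra.
From mathcomp Require Import all_classical all_reals all_analysis.
From mathcomp Require Import ring lra zify.
Import Order.TTheory GRing.Theory Num.Theory.
Import numFieldNormedType.Exports.
Lemma bin_mul n m r : (r <= m)%N -> (m <= n)%N ->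
  ('C(n,r) * 'C(n-r, m-r) = 'C(n,m) * 'C(m,r))%N.
Proof.
move=> rm mn.
have h1 := bin_fact (leq_trans rm mn).
have e : (n - r - (m - r) = n - m)%N by lia.
have h2 := @bin_fact (n - r) (m - r) ltac:(lia). rewrite e in h2.
have h3 := bin_fact mn. have h4 := bin_fact rm.
have pos : (0 < r`! * (m-r)`! * (n-m)`!)%N by rewrite !muln_gt0 !fact_gt0.
apply/eqP; rewrite -(eqn_pmul2r pos); apply/eqP.
have -> : ('C(n, r) * 'C(n - r, m - r) * (r`! * (m - r)`! * (n - m)`!) =
   'C(n, r) * (r`! * ('C(n - r, m - r) * ((m - r)`! * (n - m)`!))))%N by ring.
rewrite h2 h1.
have -> : ('C(n, m) * 'C(m,r) * (r`! * (m - r)`! * (n - m)`!) =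
   'C(n, m) * (('C(m, r) * (r`! * (m - r)`!)) * (n - m)`!))%N by ring.
by rewrite h4 h3.
Qed.
Lemma card_supersets n (T : {set 'I_n}) m : (#|T| <= m)%N ->
  #|[set S : {set 'I_n} | (#|S| == m) && (T \subset S)]| = 'C(n - #|T|, m - #|T|).
Proof.
move=> Tm.
have -> : (n - #|T| = #|~: T|)%N by have := cardsC T; rewrite card_ord; lia.
rewrite -cards_draws.
have -> : [set S : {set 'I_n} | (#|S| == m) && (T \subset S)] =
   [set A :|: T | A in [set A : {set 'I_n} | A \subset ~: T & #|A| == m - #|T|]].
  apply/setP => S; rewrite inE; apply/andP/imsetP.
  - case=> /eqP hS TS; exists (S :\: T).
      rewrite inE; apply/andP; split; first by rewrite finset.setDE subsetIr.
      by rewrite cardsD (finset.setIidPr TS) hS.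
    by rewrite finset.setUC -{1}(finset.setIidPr TS) finset.setID.
  - case=> A; rewrite inE => /andP[AsubC /eqP hA] ->.
    have AT : A :&: T = finset.set0.
      apply/setP => x; rewrite !inE; apply/negbTE; apply/negP => /andP[xA xT].
      by move/fintype.subsetP: AsubC => /(_ x xA); rewrite inE xT.
    by rewrite cardsU AT cards0 subn0 hA subnK // finset.subsetUr.
apply: card_in_imset => A B; rewrite !inE => /andP[hA _] /andP[hB _] E.
apply/setP => x; have := congr1 (fun X : {set 'I_n} => x \in X) E; rewrite /= !inE.
move/fintype.subsetP: hA => /(_ x); move/fintype.subsetP: hB => /(_ x); rewrite !inE.
case: (x \in A); case: (x \in B); case: (x \in T) => //=; by move=> _ /(_ isT).
Qed.

Local Open Scope ring_scope.

Definition hS (R : realType) {n} m (EG : {set {set 'I_n}}) (S : {set 'I_n}) : R :=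
  \sum_(F in EG | F \subset S) ('C(m, #|F|)%:R)^-1.

Lemma pin_ge0 (R : realType) k (EH : {set {set 'I_k}}) m : 0 <= pin R EH m.
Proof. exact: bigmax_ge_id. Qed.

Lemma avg (R : realType) n m (EG : {set {set 'I_n}}) : (m <= n)%N ->
  (forall F, F \in EG -> #|F| <= m)%N ->
  \sum_(S : {set 'I_n} | #|S| == m) hS R m EG S = 'C(n, m)%:R * hn R EG.
Proof.
move=> mn hE; rewrite /hS /hn.
rewrite (exchange_big_dep (fun F => F \in EG)); last by move=> S F _ /andP[].
rewrite mulr_sumr; apply: eq_bigr => F FE.
have rm := hE F FE.
rewrite (eq_bigl (fun S => S \in [set S : {set 'I_n} | (#|S| == m) && (F \subset S)]));
  last by move=> S; rewrite !inE FE.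
rewrite sumr_const card_supersets //.
have e := congr1 (fun x : nat => x%:R : R) (@bin_mul n m #|F| rm mn); rewrite /= !natrM in e.
have h1 : ('C(m, #|F|)%:R : R) != 0 by rewrite pnatr_eq0 -lt0n bin_gt0.
have h2 : ('C(n, #|F|)%:R : R) != 0 by rewrite pnatr_eq0 -lt0n bin_gt0 (leq_trans rm mn).
rewrite mulrC mulrC -[_ * _^-1]/(_ / _) -[X in _ = X]/(_ / _).
have eN : ('C(n - #|F|, m - #|F|)%:R : R) = 'C(n, m)%:R * 'C(m, #|F|)%:R / 'C(n, #|F|)%:R.
  by rewrite -e mulrC mulKf.
rewrite -[_ *+ 'C(n - #|F|, m - #|F|)]mulr_natr eN; field.
by rewrite h1 h2.
Qed.

Lemma label_exists n (S : {set 'I_n}) m : #|S| = m ->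
  exists g : 'I_m -> 'I_n, [/\ injective g, (forall i, g i \in S) &
     (forall x, x \in S -> exists i, x = g i)].
Proof.
move=> hSm; subst m.
exists enum_val; split; [exact: enum_val_inj | exact: enum_valP |].
by move=> x xS; exists (enum_rank_in xS x); rewrite enum_rankK_in.
Qed.

Lemma relabel (R : realType) k (EH : {set {set 'I_k}}) n (EG : {set {set 'I_n}})
  (S : {set 'I_n}) m : #|S| = m -> types_sub EG EH ->
  (forall f, is_embedding EH EG f -> ~~ (f @: [set: 'I_k] \subset S)) ->
  hS R m EG S <= pin R EH m.
Proof.
move=> hSm tsub hfree.
have [g [ginj gS gsurj]] := @label_exists n S m hSm.
pose EG' := [set F' : {set 'I_m} | g @: F' \in EG].
have t' : types_sub EG' EH.
  apply/forallP => F'; apply/implyP; rewrite inE => hF.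
  move/forallP: tsub => /(_ (g @: F')) /implyP /(_ hF).
  by rewrite card_imset.
have ns : ~~ subgraph EH EG'.
  apply/negP => /existsP [f /andP[finj fedges]].
  pose f2 := [ffun i => g (f i)].
  have : is_embedding EH EG f2.
    apply/andP; split.
      apply/injectiveP => i j; rewrite !ffunE => /ginj; exact: (injectiveP _ finj).
    apply/forallP => F; apply/implyP => FH.
    move/forallP: fedges => /(_ F) /implyP /(_ FH); rewrite inE.
    suff -> : f2 @: F = g @: (f @: F) by [].
    by rewrite -(imset_comp g f); apply: eq_imset => i; rewrite ffunE.
  move/hfree/negP; apply; apply/fintype.subsetP => x /imsetP [i _ ->].
  by rewrite ffunE gS.
have -> : hS R m EG S = hn R EG'.
  rewrite /hS /hn.
  rewrite (eq_bigl (fun F : {set 'I_n} => F \in [set g @: F' | F' : {set 'I_m} in EG'])); last first.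
    move=> F; apply/andP/imsetP.
    - case=> FE FS; exists (g @^-1: F); last first.
        apply/setP => x; apply/idP/imsetP => [xF|[i]]; last by rewrite inE => iF ->.
        have [i ?] := gsurj x (fintype.subsetP FS x xF); subst x.
        by exists i; rewrite ?inE.
      rewrite inE.
      suff -> : g @: (g @^-1: F) = F by [].
      apply/setP => x; apply/imsetP/idP => [[i]|xF]; first by rewrite inE => iF ->.
      have [i ?] := gsurj x (fintype.subsetP FS x xF); subst x.
      by exists i; rewrite ?inE.
    - case=> F' hF' ->; rewrite inE in hF'; split => //.
      by apply/fintype.subsetP => x /imsetP [i _ ->].
  rewrite big_imset /=; last by move=> A B _ _; apply: imset_inj.
  by apply: eq_bigr => F' _; rewrite card_imset.
by apply: le_bigmax_cond; rewrite t' ns.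
Qed.

Lemma types_sub_card k n (EH : {set {set 'I_k}}) (EG : {set {set 'I_n}}) F :
  types_sub EG EH -> F \in EG -> (#|F| <= k)%N.
Proof.
move/forallP => /(_ F) /implyP h /h /existsP [F' /andP[_ /eqP <-]].
by apply: leq_trans (max_card _) _; rewrite card_ord.
Qed.

Lemma hS_le_pin (R : realType) k (EH : {set {set 'I_k}}) n (EG : {set {set 'I_n}}) m :
  types_sub EG EH -> ~~ subgraph EH EG ->
  forall S : {set 'I_n}, #|S| == m -> hS R m EG S <= pin R EH m.
Proof.
move=> ts ns S /eqP hSm; apply: relabel => // f hf.
by move: ns; rewrite /subgraph; apply: contraNN => _; apply/existsP; exists f.
Qed.

Lemma pin_mono (R : realType) k (EH : {set {set 'I_k}}) m n :
  (k <= m)%N -> (m <= n)%N -> pin R EH n <= pin R EH m.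
Proof.
move=> km mn; rewrite {1}/pin; apply: bigmax_le; first exact: pin_ge0.
move=> EG /andP[ts ns].
have cpos : (0 : R) < 'C(n, m)%:R by rewrite ltr0n bin_gt0.
rewrite -(ler_pM2l cpos) -avg //; last first.
  by move=> F FE; apply: leq_trans km; apply: types_sub_card ts FE.
apply: (@le_trans _ _ (\sum_(S : {set 'I_n} | #|S| == m) pin R EH m)).
  apply: ler_sum => S; move=> hSm; have := @hS_le_pin R k EH n EG m ts ns S hSm; apply.
rewrite (eq_bigl (fun S => S \in [set S : {set 'I_n} | #|S| == m])); last by move=> S; rewrite inE.
by rewrite sumr_const card_draws card_ord mulr_natl.
Qed.

Lemma exists_m (R : realType) k (EH : {set {set 'I_k}}) (e : R) : 0 < e ->
  exists m, (k < m)%N /\ pin R EH m < piH R EH + e.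
Proof.
move=> he.
pose v := fun n => pin R EH (n + k.+1).
have vni : nonincreasing_seq v.
  by move=> p q pq; apply: pin_mono; lia.
have vlb : has_lbound (range v)%classic by exists 0 => _ [t _ <-]; exact: pin_ge0.
have hv : (v @ \oo --> limn v)%classic := nonincreasing_is_cvgn vni vlb.
have hu : (pin R EH @ \oo --> limn v)%classic by rewrite -(cvg_shiftn k.+1).
have eq : piH R EH = limn v by rewrite /piH; apply: cvg_lim.
move/cvgrPdistC_lt: hv => /(_ e he) /filter_ex [t ht].
exists (t + k.+1); split; first by lia.
have := ler_norm (v t - limn v); rewrite eq -/(v t); lra.
Qed.

Theorem mainTheorem3 (R : realType) (k : nat) (EH : {set {set 'I_k}})
  (a : R) (ha : 0 < a) :
  exists b : R, 0 < b /\
  exists n0 : nat, (0 < n0)%N /\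
  forall (n : nat) (EG : {set {set 'I_n}}),
    (n0 < n)%N ->
    edge_types EG =i edge_types EH ->
    piH R EH + a < hn R EG ->
    b * ('C(n, k))%:R <= (#|copies EH EG|)%:R.
Proof.
have [m [km pm]] := @exists_m R k EH (a / 2) ltac:(lra).
pose M : R := (2 ^ m)%:R.
have Mpos : 0 < M by rewrite ltr0n expn_gt0.
have Ypos : (0:R) < 'C(m,k)%:R by rewrite ltr0n bin_gt0 ltnW.
exists (a / (2 * M * 'C(m,k)%:R)); split.
  by apply: divr_gt0 => //; rewrite !mulr_gt0.
exists m; split; first by lia.
move=> n EG nm htypes hh.
have mn : (m <= n)%N := ltnW nm.
have ts : types_sub EG EH.
  apply/forallP => F; apply/implyP => FE.
  have := htypes #|F|; rewrite !unfold_in /edge_types.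
  have -> : [exists F0 in EG, #|F0| == #|F|] by apply/existsP; exists F; rewrite FE eqxx.
  by move=> /esym.
have sizes : forall F, F \in EG -> (#|F| <= m)%N.
  by move=> F FE; apply: leq_trans (ltnW km); exact: types_sub_card ts FE.
have av := @avg R n m EG mn sizes.
pose good S := pin R EH m < hS R m EG S.
pose Good := [set S : {set 'I_n} | (#|S| == m) && good S].
have hSle : forall S : {set 'I_n}, #|S| == m -> hS R m EG S <= M.
  move=> S /eqP hSm; rewrite /hS.
  apply: (@le_trans _ _ (\sum_(F in EG | F \subset S) (1:R))).
    apply: ler_sum => F _; case: (posnP 'C(m, #|F|)) => [->|p].
      by rewrite mulr0n invr0 ler01.
    by rewrite invf_le1 ?ltr0n // ler1n.
  rewrite -(natr_sum _ _ _ (fun=> 1%N)) ler_nat sum1dep_card /M -hSm -card_powerset.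
  by apply: subset_leq_card; apply/fintype.subsetP => F; rewrite !inE => /andP[].
have pt : forall S : {set 'I_n}, #|S| == m ->
    hS R m EG S <= pin R EH m + (S \in Good)%:R * M.
  move=> S hSm; rewrite inE hSm /=; case: (boolP (good S)) => g /=.
    by rewrite mul1r; have := hSle S hSm; have := @pin_ge0 R k EH m; lra.
  by rewrite mul0r addr0 leNgt.
have keyR : 'C(n,m)%:R * hn R EG <= 'C(n,m)%:R * pin R EH m + #|Good|%:R * M.
  rewrite -av.
  apply: (@le_trans _ _ (\sum_(S : {set 'I_n} | #|S| == m) (pin R EH m + (S \in Good)%:R * M))).
    by apply: ler_sum => S hSm; have := pt S hSm; apply.
  rewrite big_split /= -mulr_suml.
  have e1 : \sum_(S : {set 'I_n} | #|S| == m) pin R EH m = 'C(n,m)%:R * pin R EH m.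
    rewrite (eq_bigl (fun S => S \in [set S : {set 'I_n} | #|S| == m])); last by move=> S; rewrite inE.
    by rewrite sumr_const card_draws card_ord mulr_natl.
  have e2 : \sum_(S : {set 'I_n} | #|S| == m) ((S \in Good)%:R : R) = #|Good|%:R.
    rewrite -natr_sum; congr (_%:R).
    rewrite -sum1_card big_mkcond /= [RHS]big_mkcond /=; apply: eq_bigr => S _.
    by rewrite !inE; case: (#|S| == m); case: (good S).
  by rewrite e1 e2.
set Im := [set c.1 | c in copies EH EG].
have ImK : forall T, T \in Im -> #|T| = k.
  move=> T /imsetP [c]; rewrite inE => /existsP [f /andP[/andP[finj _] /eqP ->]] ->.
  by rewrite /= card_imset ?cardsT ?card_ord //; exact/injectiveP.
have cover : forall S, S \in Good -> exists2 T, T \in Im & T \subset S.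
  move=> S; rewrite inE => /andP[/eqP hSm gS].
  case: (pselect (exists f, is_embedding EH EG f && (f @: [set: 'I_k] \subset S))).
    move=> [f /andP[fe fs]]; exists (f @: [set: 'I_k]) => //.
    apply/imsetP; exists (copy_of EH f) => //.
    by rewrite inE; apply/existsP; exists f; rewrite fe eqxx.
  move=> nf; exfalso; move: gS; rewrite /good ltNge; apply/negP/negPn.
  apply: relabel hSm ts _ => f fe; apply/negP => fs; apply: nf; exists f; by rewrite fe fs.
have cnt : (#|Good| <= #|Im| * 'C(n - k, m - k))%N.
  rewrite -sum1_card.
  apply: (@leq_trans (\sum_(S in Good) \sum_(T in Im) (T \subset S : nat))).
    apply: leq_sum => S SG; have [T TI TS] := cover S SG.
    by rewrite (bigD1 T) //= TS.
  apply: (@leq_trans (\sum_(S : {set 'I_n} | #|S| == m) \sum_(T in Im) (T \subset S : nat))).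
    rewrite [X in (X <= _)%N]big_mkcond [X in (_ <= X)%N]big_mkcond /=.
    apply: leq_sum => S _; case: ifP => // SG.
    by move: SG; rewrite inE => /andP[-> _].
  rewrite exchange_big /=.
  apply: (@leq_trans (\sum_(T in Im) 'C(n - k, m - k))); last by rewrite sum_nat_const mulnC.
  apply: leq_sum => T TI; rewrite -(ImK T TI) -card_supersets; last by rewrite ImK // ltnW.
  rewrite -sum1_card big_mkcond [X in (_ <= X)%N]big_mkcond /=; apply: leq_sum => S _.
  by rewrite inE; case: (#|S| == m); case: (T \subset S).
have cop : (#|Im| <= #|copies EH EG|)%N := leq_imset_card _ _.
have Cpos : (0 : R) < 'C(n, m)%:R by rewrite ltr0n bin_gt0.
have Xpos : (0 : R) < 'C(n - k, m - k)%:R by rewrite ltr0n bin_gt0 leq_sub2r.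
have GX : (#|Good|%:R : R) <= #|copies EH EG|%:R * 'C(n - k, m - k)%:R.
  by rewrite -natrM ler_nat (leq_trans cnt) // leq_mul2r cop orbT.
have e := congr1 (fun x : nat => x%:R : R) (@bin_mul n m k (ltnW km) mn).
rewrite /= !natrM in e.
have h1 : 'C(n, m)%:R * (a / 2) < #|Good|%:R * M.
  have := @pin_ge0 R k EH m; nra.
set cp : R := #|copies EH EG|%:R in GX *.
set Cnk : R := 'C(n, k)%:R in e *.
set Cnm : R := 'C(n, m)%:R in e Cpos h1 *.
set X : R := 'C(n - k, m - k)%:R in e Xpos GX *.
set Y : R := 'C(m, k)%:R in e Ypos *.
set G : R := #|Good|%:R in GX h1.
rewrite mulrAC ler_pdivrMr; last by rewrite !mulr_gt0.
rewrite -(ler_pM2r Xpos) -[a * Cnk * X]mulrA e.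
have h2 : G * M <= cp * X * M by rewrite ler_pM2r.
have h3 : Cnm * (a / 2) < cp * X * M := lt_le_trans h1 h2.
have h4 : 0 < (cp * X * M - Cnm * (a / 2)) * Y by apply: mulr_gt0 => //; lra.
nra.
Qed.
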